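(* Let $X$ be an infinite compact metrizable space and $h\colon X\to X$ a minimal homeomorphism, and let $\varepsilon>0$. (1) For any non-empty open $U\subset X$ there is a non-empty open $E\subset U$ with $\mu(E)<\varepsilon$ for all $\mu\in M_h(X)$. (2) For any non-empty open $U\subset X$ with $\partial U$ universally null, there is a closed set $K\subset U$ with $\mathrm{int}(K)\neq\varnothing$ such that $\mu(U\setminus K)<\varepsilon$ for all $\mu\in M_h(X)$. (3) For any non-empty open $U\subset X$ with $\partial U$ universally null, there is an open set $E\subset U$ with $\overline{E}\subset U$ such that $\mu(U\setminus\overline{E})<\varepsilon$ for all $\mu\in M_h(X)$. (4) For any closed $K\subset X$ with $\partial K$ universally null, there is an open set $E\subset X$ with $K\subset E$ and $\mu(E\setminus K)<\varepsilon$ for all $\mu\in M_h(X)$.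
   Context: $M_h(X)$ denotes the set of $h$-invariant Borel probability measures on $X$. A Borel set is universally null if it has measure $0$ for all $\mu\in M_h(X)$. $\partial A$ denotes the boundary of $A$. *)

(* Defs.v *)
From HB Require Import structures.
From mathcomp Require Import all_boot all_order all_algebra.
From mathcomp Require Import all_classical all_reals all_analysis.
Set Implicit Arguments. Unset Strict Implicit. Unset Printing Implicit Defensive.
Import Order.TTheory GRing.Theory Num.Theory.
Local Open Scope classical_set_scope.
Local Open Scope ring_scope.

Definition borel (X : ptopologicalType) := g_sigma_algebraType (@open X).

Definition homeomorphism (X : topologicalType) (h : X -> X) : Prop :=
  exists g : X -> X, [/\ cancel h g, cancel g h, continuous h & continuous g].

Definition minimal_map (X : topologicalType) (h : X -> X) : Prop :=
  forall A : set X, closed A -> h @` A = A -> A = set0 \/ A = setT.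

Definition invariant_measure (R : realType) (X : ptopologicalType) (h : X -> X)
    (mu : probability (borel X) R) : Prop :=
  forall A : set (borel X), measurable A -> mu (h @^-1` A) = mu A.

Definition universally_null (R : realType) (X : ptopologicalType) (h : X -> X)
    (B : set X) : Prop :=
  (measurable (B : set (borel X))) /\
  forall mu : probability (borel X) R, invariant_measure h mu -> mu B = 0%E.

Definition boundary (X : topologicalType) (A : set X) : set X :=
  closure A `\` interior A.

(* Main.v *)
Require Import Defs.
From HB Require Import structures.
From mathcomp Require Import all_boot all_order all_algebra.
From mathcomp Require Import all_classical all_reals all_analysis.
From mathcomp Require Import lra.
Set Implicit Arguments. Unset Strict Implicit. Unset Printing Implicit Defensive.
Import Order.TTheory GRing.Theory Num.Theory.
Import numFieldTopology.Exports numFieldNormedType.Exports.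
Local Open Scope classical_set_scope.
Local Open Scope ring_scope.

Section Riesz.
Variables (R : realType) (X : ptopologicalType).
Hypothesis hX : hausdorff_space X.
Hypothesis cX : compact [set: X].
Variable lam : set X -> R.
Hypothesis lam_ge0 : forall O, open O -> 0 <= lam O.
Hypothesis lam_sub : forall A B, open A -> open B -> lam (A `|` B) <= lam A + lam B.
Hypothesis lam_sup : forall A B O, open A -> open B -> open O -> A `&` B = set0 ->
  A `<=` O -> B `<=` O -> lam A + lam B <= lam O.
Hypothesis lam0 : lam set0 = 0.
Hypothesis lamT : lam setT = 1.

Lemma lam_mono A B : open A -> open B -> A `<=` B -> lam A <= lam B.
Proof.
move=> oA oB AB; have := lam_sup oA open0 oB (setI0 A) AB (sub0set _).
by rewrite lam0 addr0.
Qed.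

Lemma sepX (A B : set X) : closed A -> closed B -> A `&` B = set0 ->
  exists U V : set X, [/\ open U, open V, A `<=` U, B `<=` V & U `&` V = set0].
Proof.
move=> cA cB AB; have := compact_normal hX cX.
by move/(@normal_openP R) => H; exact: H.
Qed.

Definition kap (F : set X) : R :=
  inf [set lam O | O in [set O | open O /\ F `<=` O]].

Lemma kap_le F O : open O -> F `<=` O -> kap F <= lam O.
Proof.
move=> oO FO; apply: ge_inf; last by exists O.
by exists 0 => _ [U [oU _] <-]; exact: lam_ge0.
Qed.

Lemma kap_ge F c : (forall O, open O -> F `<=` O -> c <= lam O) -> c <= kap F.
Proof.
move=> H; apply: lb_le_inf.
  by exists (lam setT), setT => //; split => //; exact: openT.
move=> y [U [oU FU] <-]; exact: H.
Qed.

Lemma kap_ge0 F : 0 <= kap F.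
Proof. by apply: kap_ge => O oO _; exact: lam_ge0. Qed.

Lemma kap_le1 F : kap F <= 1.
Proof. by rewrite -lamT; apply: kap_le => //; exact: openT. Qed.

Lemma kap_mono F G : F `<=` G -> kap F <= kap G.
Proof. by move=> FG; apply: kap_ge => O oO GO; apply: kap_le => //; exact: subset_trans GO. Qed.

Lemma kap0 : kap set0 = 0.
Proof.
apply: le_anti; rewrite kap_ge0 andbT.
by have := kap_le (@open0 X) (@subset_refl _ set0); rewrite lam0.
Qed.

Lemma kapT : kap setT = 1.
Proof.
apply/eqP; rewrite eq_le kap_le1 /=; apply: kap_ge => O oO TO.
have -> : O = setT by apply/seteqP; split.
by rewrite lamT.
Qed.

Lemma kapU F G : kap (F `|` G) <= kap F + kap G.
Proof.
suff H : kap (F `|` G) - kap G <= kap F by lra.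
apply: kap_ge => O oO FO.
suff : kap (F `|` G) - lam O <= kap G by lra.
apply: kap_ge => O' oO' GO'.
have := kap_le (openU oO oO') (setUSS FO GO'); have := lam_sub oO oO'; lra.
Qed.

Lemma kap_disj F G : closed F -> closed G -> F `&` G = set0 ->
  kap F + kap G <= kap (F `|` G).
Proof.
move=> cF cG FG; apply: kap_ge => O oO FGO.
have [U [V [oU oV FU GV UV]]] := sepX cF cG FG.
have h1 : kap F <= lam (O `&` U).
  by apply: kap_le; [exact: openI | move=> x Fx; split; [apply: FGO; left|apply: FU]].
have h2 : kap G <= lam (O `&` V).
  by apply: kap_le; [exact: openI | move=> x Gx; split; [apply: FGO; right|apply: GV]].
have h3 : lam (O `&` U) + lam (O `&` V) <= lam O.
  apply: lam_sup; [exact: openI|exact: openI|exact: oO| |exact: subIsetl|exact: subIsetl].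
  by rewrite setIACA UV setI0.
lra.
Qed.

Definition rho (G : set X) : R :=
  sup [set kap F | F in [set F | closed F /\ F `<=` G]].

Lemma rho_ge F G : closed F -> F `<=` G -> kap F <= rho G.
Proof.
move=> cF FG; apply: ub_le_sup; last by exists F.
by exists 1 => _ [K _ <-]; exact: kap_le1.
Qed.

Lemma rho_le G c : (forall F, closed F -> F `<=` G -> kap F <= c) -> rho G <= c.
Proof.
move=> H; apply: ge_sup.
  by exists (kap set0), set0 => //; split => //; exact: closed0.
move=> y [F [cF FG] <-]; exact: H.
Qed.

Lemma rho_ge0 G : 0 <= rho G.
Proof. by rewrite -kap0; apply: rho_ge => //; exact: closed0. Qed.

Lemma rho_le1 G : rho G <= 1.
Proof. by apply: rho_le => F _ _; exact: kap_le1. Qed.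

Lemma rho_mono G G' : G `<=` G' -> rho G <= rho G'.
Proof. by move=> GG'; apply: rho_le => F cF FG; apply: rho_ge => //; exact: subset_trans GG'. Qed.

Lemma rho0 : rho set0 = 0.
Proof.
apply/eqP; rewrite eq_le rho_ge0 andbT; apply: rho_le => F _ F0.
have -> : F = set0 by rewrite -subset0.
by rewrite kap0.
Qed.

Lemma rhoT : rho setT = 1.
Proof. by apply/eqP; rewrite eq_le rho_le1 /= -kapT; apply: rho_ge => //; exact: closedT. Qed.

Lemma shrink (F A B : set X) : closed F -> open A -> open B -> F `<=` A `|` B ->
  exists F1 F2, [/\ closed F1, closed F2, F1 `<=` A, F2 `<=` B & F `<=` F1 `|` F2].
Proof.
move=> cF oA oB FAB.
have cP : closed (F `&` ~` B) by apply: closedI => //; exact: open_closedC.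
have cQ : closed (F `&` ~` A) by apply: closedI => //; exact: open_closedC.
have PQ : (F `&` ~` B) `&` (F `&` ~` A) = set0.
  apply/seteqP; split => // x [[Fx nBx] [_ nAx]].
  by case: (FAB x Fx).
have [U [V [oU oV PU QV UV]]] := sepX cP cQ PQ.
exists (F `&` ~` V), (F `&` ~` U); split.
- by apply: closedI => //; exact: open_closedC.
- by apply: closedI => //; exact: open_closedC.
- move=> x [Fx nVx]; apply: contrapT => nAx; exact: nVx (QV x (conj Fx nAx)).
- move=> x [Fx nUx]; apply: contrapT => nBx; exact: nUx (PU x (conj Fx nBx)).
- move=> x Fx; have [Vx|nVx] := pselect (V x); last by left.
  right; split => // Ux.
  by have : (U `&` V) x by []; rewrite UV.
Qed.

Lemma open_bigU (O : nat -> set X) n : (forall i, open (O i)) ->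
  open (\big[setU/set0]_(i < n) O i).
Proof.
move=> oO; elim: n => [|n IH]; first by rewrite big_ord0; exact: open0.
by rewrite big_ord_recr /=; exact: openU.
Qed.

Lemma kap_cover (O : nat -> set X) n : (forall i, open (O i)) ->
  forall F, closed F -> F `<=` \big[setU/set0]_(i < n) O i ->
  kap F <= \sum_(i < n) rho (O i).
Proof.
move=> oO; elim: n => [|n IH] F cF FO.
  rewrite big_ord0; move: FO; rewrite big_ord0 => F0.
  have -> : F = set0 by rewrite -subset0.
  by rewrite kap0.
move: FO; rewrite big_ord_recr /= => FO.
have [F1 [F2 [cF1 cF2 F1O F2O FF]]] := shrink cF (open_bigU n oO) (oO n) FO.
rewrite big_ord_recr /=.
have := kap_mono FF; have := kapU F1 F2; have := IH _ cF1 F1O.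
have := rho_ge cF2 F2O; lra.
Qed.

Lemma seq_bound (s : seq nat) : exists n, forall i, i \in s -> (i < n)%N.
Proof.
elim: s => [|a s [n IH]]; first by exists 0%N.
exists (maxn a.+1 n) => i; rewrite inE => /orP[/eqP ->|/IH]; rewrite leq_max.
  by rewrite ltnSn.
by move=> ->; rewrite orbT.
Qed.

Lemma finite_cover (F : set X) (O : nat -> set X) : closed F ->
  (forall i, open (O i)) -> F `<=` \bigcup_i O i ->
  exists n, F `<=` \big[setU/set0]_(i < n) O i.
Proof.
move=> cF oO FO.
have : compact F by apply: (subclosed_compact cF cX).
rewrite compact_cover => /(_ nat setT O) []; first by move=> i _; exact: oO.
  move=> y Fy; have [i _ Oi] := FO y Fy; by exists i.
move=> D _ FD; have [n Hn] := seq_bound (finmap.enum_fset D).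
exists n; rewrite -bigcup_mkord => y Fy; have [i Di Oi] := FD y Fy.
by exists i => //; apply: Hn.
Qed.

Lemma rho_sigma (O : nat -> set X) : (forall i, open (O i)) ->
  ((rho (\bigcup_i O i))%:E <= \sum_(i <oo) (rho (O i))%:E)%E.
Proof.
move=> oO.
have s0 : (0 <= \sum_(i <oo) (rho (O i))%:E)%E.
  by apply: nneseries_ge0 => i _; rewrite lee_fin rho_ge0.
case Es : (\sum_(i <oo) (rho (O i))%:E)%E => [r| |]; last 2 first.
- by rewrite leey.
- by rewrite Es in s0.
rewrite lee_fin; apply: rho_le => F cF FO.
have [n Fn] := finite_cover cF oO FO.
have := kap_cover oO cF Fn => /le_trans; apply.
rewrite -lee_fin -Es -sumEFin.
have := @nneseries_lim_ge R (fun i => (rho (O i))%:E) xpredT 0%N n.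
rewrite big_mkord; apply => i _ _; rewrite lee_fin rho_ge0 //.
Qed.

Definition ms (A : set X) : R :=
  inf [set rho G | G in [set G | open G /\ A `<=` G]].

Lemma ms_le A G : open G -> A `<=` G -> ms A <= rho G.
Proof.
move=> oG AG; apply: ge_inf; last by exists G.
by exists 0 => _ [U _ <-]; exact: rho_ge0.
Qed.

Lemma ms_ge A c : (forall G, open G -> A `<=` G -> c <= rho G) -> c <= ms A.
Proof.
move=> H; apply: lb_le_inf.
  by exists (rho setT), setT => //; split => //; exact: openT.
move=> y [U [oU AU] <-]; exact: H.
Qed.

Lemma ms_ge0 A : 0 <= ms A.
Proof. by apply: ms_ge => G _ _; exact: rho_ge0. Qed.

Lemma ms_le1 A : ms A <= 1.
Proof. by rewrite -rhoT; apply: ms_le => //; exact: openT. Qed.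

Lemma ms_mono A B : A `<=` B -> ms A <= ms B.
Proof. by move=> AB; apply: ms_ge => G oG BG; apply: ms_le => //; exact: subset_trans BG. Qed.

Lemma ms0 : ms set0 = 0.
Proof.
apply: le_anti; rewrite ms_ge0 andbT.
by have := ms_le (@open0 X) (@subset_refl _ set0); rewrite rho0.
Qed.

Lemma ms_open G : open G -> ms G = rho G.
Proof.
move=> oG; apply: le_anti; rewrite ms_le //=.
by apply: ms_ge => G' _ GG'; exact: rho_mono.
Qed.

Lemma msT : ms setT = 1.
Proof. by rewrite ms_open ?rhoT //; exact: openT. Qed.

Lemma ms_kap F : closed F -> kap F <= ms F.
Proof. by move=> cF; apply: ms_ge => G _ FG; exact: rho_ge. Qed.

Lemma ms_approx A e : 0 < e -> exists G, [/\ open G, A `<=` G & rho G <= ms A + e].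
Proof.
move=> e0; apply: contrapT => H.
have : ms A + e <= ms A.
  apply: ms_ge => G oG AG; apply: contrapT => /negP; rewrite -ltNge => lt.
  by apply: H; exists G; split => //; exact: ltW.
lra.
Qed.

Lemma ms_sigma (A : nat -> set X) :
  ((ms (\bigcup_i A i))%:E <= \sum_(i <oo) (ms (A i))%:E)%E.
Proof.
apply/lee_addgt0Pr => e e0.
have [G HG] : exists G : nat -> set X, forall i,
    [/\ open (G i), A i `<=` G i & rho (G i) <= ms (A i) + e / (2 ^ i.+1)%:R].
  have ep i : 0 < e / (2 ^ i.+1)%:R by apply: divr_gt0 => //; rewrite ltr0n expn_gt0.
  exists (fun i => projT1 (cid (ms_approx (A i) (ep i)))) => i.
  exact: (projT2 (cid (ms_approx (A i) (ep i)))).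
have oG i : open (G i) by case: (HG i).
apply: (@le_trans _ _ ((rho (\bigcup_i G i))%:E)).
  rewrite lee_fin; apply: ms_le; first exact: bigcup_open.
  by move=> x [i _ Ax]; exists i => //; case: (HG i) => _ + _; apply.
apply: le_trans (rho_sigma oG) _.
apply: (@le_trans _ _ (\sum_(i <oo) ((ms (A i))%:E + (e / (2 ^ i.+1)%:R)%:E))%E).
  apply: lee_nneseries => i _; first by rewrite lee_fin rho_ge0.
  by rewrite -EFinD lee_fin; case: (HG i).
apply: epsilon_trick => [i|]; first by rewrite lee_fin ms_ge0.
exact: ltW.
Qed.

Lemma ms_cara (O : set X) A : open O -> ms (A `&` O) + ms (A `&` ~` O) <= ms A.
Proof.
move=> oO.
suff H : forall G, open G -> A `<=` G -> ms (A `&` O) + ms (A `&` ~` O) <= rho G.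
  by have := ms_ge H.
move=> G oG AG.
have h1 : ms (A `&` O) <= rho (G `&` O).
  by apply: ms_le; [exact: openI | exact: setSI].
suff : rho (G `&` O) <= rho G - ms (A `&` ~` O) by lra.
apply: rho_le => F1 cF1 F1GO.
suff : ms (A `&` ~` O) <= rho G - kap F1 by lra.
have h2 : ms (A `&` ~` O) <= rho (G `&` ~` F1).
  apply: ms_le; first by apply: openI => //; exact: closed_openC.
  move=> x [Ax nOx]; split; first exact: AG.
  by move=> F1x; apply: nOx; case: (F1GO x F1x).
suff : rho (G `&` ~` F1) <= rho G - kap F1 by lra.
apply: rho_le => F2 cF2 F2G.
have d : F1 `&` F2 = set0.
  by apply/seteqP; split => // x [F1x F2x]; case: (F2G x F2x) => _; apply.
have := kap_disj cF1 cF2 d.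
have : kap (F1 `|` F2) <= rho G.
  apply: rho_ge; first exact: closedU.
  by move=> x [/F1GO []|/F2G []].
lra.
Qed.

Definition mstar (A : set X) : \bar R := (ms A)%:E.

Lemma mstar0 : mstar set0 = 0%E.
Proof. by rewrite /mstar ms0. Qed.

Lemma mstar_ge0 A : (0 <= mstar A)%E.
Proof. by rewrite lee_fin ms_ge0. Qed.

Lemma mstar_mono : {homo mstar : A B / A `<=` B >-> (A <= B)%E}.
Proof. by move=> A B AB; rewrite lee_fin ms_mono. Qed.

Lemma mstar_sigma : sigma_subadditive mstar.
Proof. by move=> F; exact: ms_sigma. Qed.

HB.instance Definition _ := isOuterMeasure.Build R X mstar
  mstar0 mstar_ge0 mstar_mono mstar_sigma.

Lemma cara_open (O : set X) : open O -> mstar.-caratheodory O.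
Proof.
move=> oO; apply: le_caratheodory_measurable => A.
by rewrite /mstar -EFinD lee_fin; exact: ms_cara.
Qed.

Lemma borel_cara (A : set (borel X)) : measurable A -> mstar.-caratheodory A.
Proof.
move=> mA; apply: (@smallest_sub _ _ _ (mstar.-caratheodory) _ _ _ mA).
  split.
  - exact: caratheodory_measurable_set0.
  - by move=> B cB; rewrite setTD; exact: caratheodory_measurable_setC.
  - by move=> F cF; exact: caratheodory_measurable_bigcup.
by move=> O oO; exact: cara_open.
Qed.

Definition nu : set (borel X) -> \bar R := mstar.

Lemma nu0 : nu set0 = 0%E.
Proof. exact: mstar0. Qed.

Lemma nu_ge0 A : (0 <= nu A)%E.
Proof. exact: mstar_ge0. Qed.

Lemma nu_sigma : semi_sigma_additive nu.
Proof.
move=> F mF tF mUF.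
apply: (@caratheodory_measure_sigma_additive R X mstar F) => //.
- by move=> i; exact: borel_cara.
- exact: borel_cara.
Qed.

HB.instance Definition _ := isMeasure.Build _ _ _ nu nu0 nu_ge0 nu_sigma.

Lemma nuT : nu setT = 1%E.
Proof. by rewrite /nu /mstar msT. Qed.

HB.instance Definition _ := Measure_isProbability.Build _ _ _ nu nuT.

Definition nuP : probability (borel X) R := nu.

Section Inv.
Variables (f g : X -> X).
Hypotheses (fK : cancel f g) (gK : cancel g f).
Hypotheses (cf : continuous f) (cg : continuous g).
Hypotheses (lf : forall O, open O -> lam (f @^-1` O) = lam O)
           (lg : forall O, open O -> lam (g @^-1` O) = lam O).

Let openf O : open O -> open (f @^-1` O).
Proof. by move=> oO; apply: open_comp => // x _; exact: cf. Qed.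
Let openg O : open O -> open (g @^-1` O).
Proof. by move=> oO; apply: open_comp => // x _; exact: cg. Qed.
Let closedf F : closed F -> closed (f @^-1` F).
Proof. by move=> cF; move/continuous_closedP : cf; apply. Qed.
Let closedg F : closed F -> closed (g @^-1` F).
Proof. by move=> cF; move/continuous_closedP : cg; apply. Qed.
Let gf (A : set X) : g @^-1` (f @^-1` A) = A.
Proof. by apply/seteqP; split => x /=; rewrite gK. Qed.
Let fg (A : set X) : f @^-1` (g @^-1` A) = A.
Proof. by apply/seteqP; split => x /=; rewrite fK. Qed.

Let kap_f_le F : kap (f @^-1` F) <= kap F.
Proof. by apply: kap_ge => O oO FO; rewrite -lf //; apply: kap_le; [exact: openf|move=> x /FO]. Qed.
Let kap_g_le F : kap (g @^-1` F) <= kap F.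
Proof. by apply: kap_ge => O oO FO; rewrite -lg //; apply: kap_le; [exact: openg|move=> x /FO]. Qed.

Lemma kap_f F : kap (f @^-1` F) = kap F.
Proof. by apply: le_anti; rewrite kap_f_le /=; rewrite -{1}(gf F); exact: kap_g_le. Qed.
Lemma kap_g F : kap (g @^-1` F) = kap F.
Proof. by apply: le_anti; rewrite kap_g_le /=; rewrite -{1}(fg F); exact: kap_f_le. Qed.

Let rho_f_le G : rho (f @^-1` G) <= rho G.
Proof.
apply: rho_le => F cF FG; rewrite -kap_g; apply: rho_ge; first exact: closedg.
by move=> x /= /FG /=; rewrite gK.
Qed.
Let rho_g_le G : rho (g @^-1` G) <= rho G.
Proof.
apply: rho_le => F cF FG; rewrite -kap_f; apply: rho_ge; first exact: closedf.
by move=> x /= /FG /=; rewrite fK.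
Qed.

Lemma rho_f G : rho (f @^-1` G) = rho G.
Proof. by apply: le_anti; rewrite rho_f_le /=; rewrite -{1}(gf G); exact: rho_g_le. Qed.
Lemma rho_g G : rho (g @^-1` G) = rho G.
Proof. by apply: le_anti; rewrite rho_g_le /=; rewrite -{1}(fg G); exact: rho_f_le. Qed.

Let ms_f_le A : ms (f @^-1` A) <= ms A.
Proof. by apply: ms_ge => G oG AG; rewrite -rho_f; apply: ms_le; [exact: openf|move=> x /AG]. Qed.
Let ms_g_le A : ms (g @^-1` A) <= ms A.
Proof. by apply: ms_ge => G oG AG; rewrite -rho_g; apply: ms_le; [exact: openg|move=> x /AG]. Qed.

Lemma ms_f A : ms (f @^-1` A) = ms A.
Proof. by apply: le_anti; rewrite ms_f_le /=; rewrite -{1}(gf A); exact: ms_g_le. Qed.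

End Inv.

End Riesz.

Lemma ulim_cvg (T : Type) (U : set_system T) (UU : UltraFilter U) (R : realType)
  (a : T -> R) : (forall t, 0 <= a t <= 1) -> exists p : R, a @ U --> p.
Proof.
move=> a01.
have cpt : compact (`[0, 1] : set R) by exact: (@segment_compact R 0 1).
have [|p [_ clp]] := cpt (a @ U) _.
  suff : U (a @^-1` `[0, 1]) by [].
  apply: filterS (@filterT _ U _) => t _ /=; rewrite in_itv /=; exact: a01.
exists p => B /= nB.
have [//|UnB] := in_ultra_setVsetC (a @^-1` B) UU.
have [x [nBx Bx]] := clp (~` B) B UnB nB.
by [].
Qed.

Section PM.
Variables (R : realType) (X : ptopologicalType).
Definition pm (mu : probability (borel X) R) (A : set X) : R := fine (mu A).

Variable mu : probability (borel X) R.

Lemma pmE (A : set (borel X)) : measurable A -> mu A = (pm mu A)%:E.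
Proof. by move=> mA; rewrite /pm fineK // fin_num_measure. Qed.

Lemma pm01 (A : set (borel X)) : measurable A -> 0 <= pm mu A <= 1.
Proof.
move=> mA; rewrite -!lee_fin -pmE //; apply/andP; split; first exact: measure_ge0.
exact: probability_le1.
Qed.

Lemma pmU (A B : set (borel X)) : measurable A -> measurable B -> A `&` B = set0 ->
  pm mu (A `|` B) = pm mu A + pm mu B.
Proof.
move=> mA mB AB; apply/EFin_inj; rewrite EFinD -!pmE //; last exact: measurableU.
exact: measureU.
Qed.

Lemma pmU2 (A B : set (borel X)) : measurable A -> measurable B ->
  pm mu (A `|` B) <= pm mu A + pm mu B.
Proof.
move=> mA mB; rewrite -lee_fin EFinD -!pmE //; last exact: measurableU.
exact: measureU2.
Qed.

Lemma pm_mono (A B : set (borel X)) : measurable A -> measurable B -> A `<=` B ->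
  pm mu A <= pm mu B.
Proof.
move=> mA mB AB; rewrite -lee_fin -!pmE //; apply: le_measure => //; rewrite inE //.
Qed.

Lemma pm0 : pm mu set0 = 0.
Proof. by rewrite /pm measure0. Qed.

Lemma pmT : pm mu setT = 1.
Proof. by rewrite /pm probability_setT. Qed.

End PM.

Lemma open_borel (X : ptopologicalType) (A : set X) : open A -> measurable (A : set (borel X)).
Proof. by move=> oA; exact: sub_gen_smallest. Qed.

Lemma core (R : realType) (X : ptopologicalType) (h g : X -> X) :
  hausdorff_space X -> compact [set: X] -> cancel h g -> cancel g h ->
  continuous h -> continuous g ->
  forall C : set X, closed C ->
  (forall mu : probability (borel X) R, invariant_measure h mu -> mu C = 0%E) ->
  forall eps : R, 0 < eps ->
  exists V, [/\ open V, C `<=` V & forall mu : probability (borel X) R,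
    invariant_measure h mu -> (mu V < eps%:E)%E].
Proof.
move=> hX cX hK gK ch cg C cC nullC eps eps0.
apply: contrapT => nH.
have H V : open V -> C `<=` V -> exists mu : probability (borel X) R,
    invariant_measure h mu /\ (eps%:E <= mu V)%E.
  move=> oV HCV; apply: contrapT => nE; apply: nH; exists V; split => // mu imu.
  rewrite ltNge; apply/negP => le; apply: nE; by exists mu.
have [mu0 [imu0 _]] := H setT openT (@subsetT _ C).
have ex V : exists mu : probability (borel X) R, invariant_measure h mu /\
    (open V /\ C `<=` V -> (eps%:E <= mu V)%E).
  case: (pselect (open V /\ C `<=` V)) => [[oV HCV]|nV].
    by have [mu [imu le]] := H V oV HCV; exists mu.
  by exists mu0; split => // /nV.
pose muf V := projT1 (cid (ex V)).
have mufP V : invariant_measure h (muf V) /\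
    (open V /\ C `<=` V -> (eps%:E <= muf V V)%E) := projT2 (cid (ex V)).
pose D := [set V : set X | open V /\ C `<=` V].
pose B := fun V0 => [set V | D V /\ V `<=` V0].
have FF : ProperFilter (filter_from D B).
  apply: filter_from_proper.
    apply: filter_from_filter.
      by exists setT; split => //; exact: openT.
    move=> V1 V2 [p1 q1] [p2 q2]; exists (V1 `&` V2).
      by split; [exact: openI | by rewrite subsetI].
    move=> V [DV VV]; split; split => //; apply: subset_trans VV _;
      [exact: subIsetl | exact: subIsetr].
  by move=> V0 DV0; exists V0; split.
have [U [UU FU]] := ultraFilterLemma FF.
have PU : ProperFilter U by exact: ultra_proper.
pose a A V := pm (muf V) A.
pose lam A := lim (a A @ U).
have lamP A : measurable (A : set (borel X)) -> a A @ U --> lam A.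
  move=> mA; have [|p ap] := @ulim_cvg _ U UU R (a A).
    by move=> V; exact: pm01.
  by rewrite /lam (cvg_lim (@Rhausdorff R) ap).
have lam_ge A c : measurable (A : set (borel X)) ->
    U [set V | c <= a A V] -> c <= lam A.
  move=> mA Uc; exact: (@closed_cvg _ _ U _ (a A) (fun x => c <= x) (@closed_ge R c) Uc (lam A) (lamP A mA)).
have lam_mono A A' : measurable (A : set (borel X)) -> measurable (A' : set (borel X)) ->
    (forall V, a A V <= a A' V) -> lam A <= lam A'.
  move=> mA mA' le.
  have cv : (fun V => a A' V - a A V) @ U --> lam A' - lam A.
    by apply: cvgB; exact: lamP.
  have : 0 <= lam A' - lam A.
    apply: (@closed_cvg _ _ U _ (fun V => a A' V - a A V) (fun x => 0 <= x) (@closed_ge R 0) _ _ cv).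
    by apply: filterS (@filterT _ U _) => V _ /=; rewrite subr_ge0; exact: le.
  by rewrite subr_ge0.
have lam_add A A' : measurable (A : set (borel X)) -> measurable (A' : set (borel X)) ->
    lam A + lam A' = lim ((a A \+ a A') @ U).
  move=> mA mA'; apply/esym/cvg_lim; first exact: Rhausdorff.
  exact: cvgD (lamP _ mA) (lamP _ mA').
have lam_ext A A' : a A = a A' -> lam A = lam A' by rewrite /lam => ->.
have lim_le (u v : set X -> R) lu lv : u @ U --> lu -> v @ U --> lv ->
    (forall V, u V <= v V) -> lu <= lv.
  move=> cu cv le.
  have cvd : (fun V => v V - u V) @ U --> lv - lu by apply: cvgB.
  have : 0 <= lv - lu.
    apply: (@closed_cvg _ _ U _ (fun V => v V - u V) (fun x => 0 <= x) (@closed_ge R 0) _ _ cvd).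
    by apply: filterS (@filterT _ U _) => V _ /=; rewrite subr_ge0; exact: le.
  by rewrite subr_ge0.
have mO (O : set X) : open O -> measurable (O : set (borel X)) by exact: open_borel.
have cst (c : R) : (fun _ : set X => c) @ U --> c by exact: cvg_cst.
have lam_ge0 O : open O -> 0 <= lam O.
  move=> oO; apply: lam_ge; first exact: mO.
  by apply: filterS (@filterT _ U _) => V _ /=; have /andP[] := pm01 (muf V) (mO _ oO).
have lam_sub A1 A2 : open A1 -> open A2 -> lam (A1 `|` A2) <= lam A1 + lam A2.
  move=> o1 o2; apply: (lim_le _ _ _ _ (lamP _ (mO _ (openU o1 o2)))).
    by apply: cvgD; apply: lamP; exact: mO.
  by move=> V; apply: pmU2; exact: mO.
have lam_sup A1 A2 O : open A1 -> open A2 -> open O -> A1 `&` A2 = set0 ->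
    A1 `<=` O -> A2 `<=` O -> lam A1 + lam A2 <= lam O.
  move=> o1 o2 oO d s1 s2; apply: (lim_le (fun V => a A1 V + a A2 V)).
  - by apply: cvgD; apply: lamP; exact: mO.
  - exact: lamP (mO _ oO).
  - move=> V; rewrite /a -pmU; [|exact: mO|exact: mO|exact: d].
    apply: pm_mono; [exact: mO (openU o1 o2)|exact: mO|by move=> x [/s1|/s2]].
have lam0 : lam set0 = 0.
  have a0 : a set0 = fun _ => 0 by apply: funext => V; exact: pm0.
  by rewrite /lam a0; apply: cvg_lim; [exact: Rhausdorff|exact: cst].
have lamT : lam setT = 1.
  have a1 : a setT = fun _ => 1 by apply: funext => V; exact: pmT.
  by rewrite /lam a1; apply: cvg_lim; [exact: Rhausdorff|exact: cst].
have lam_h O : open O -> lam (h @^-1` O) = lam O.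
  move=> oO; apply: lam_ext; apply: funext => V; rewrite /a /pm.
  by case: (mufP V) => + _; move=> /(_ O (mO _ oO)) ->.
have lam_g O : open O -> lam (g @^-1` O) = lam O.
  move=> oO; apply: lam_ext; apply: funext => V; rewrite /a /pm.
  have og : open (g @^-1` O) by apply: open_comp => // x _; exact: cg.
  case: (mufP V) => + _; move=> /(_ _ (mO _ og)) <-.
  by congr (fine (muf V _)); apply/seteqP; split => x /=; rewrite hK.
have lam_C O : open O -> C `<=` O -> eps <= lam O.
  move=> oO CO; apply: lam_ge; first exact: mO.
  apply: FU; exists O; first by split.
  move=> V [[oV HCV] VO] /=; rewrite -lee_fin /a -pmE; last exact: mO.
  case: (mufP V) => _ /(_ (conj oV HCV)) /le_trans; apply.
  by apply: le_measure; rewrite ?inE; [exact: mO|exact: mO|].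
pose nu := nuP hX cX lam_ge0 lam_sub lam_sup lam0 lamT.
have inu : invariant_measure h nu.
  move=> A mA; rewrite /nu /= /mstar; congr EFin.
  exact: (ms_f lam_ge0 lam0 lamT hK gK ch cg lam_h lam_g).
have msC : ms lam C = 0 by apply: EFin_inj; exact: (nullC nu inu).
have := ms_kap lam_ge0 lamT cC; rewrite msC.
have : eps <= kap lam C by apply: kap_ge => O oO CO; exact: lam_C.
lra.
Qed.

Lemma no_period (X : ptopologicalType) (h : X -> X) :
  hausdorff_space X -> ~ finite_set [set: X] -> minimal_map h ->
  forall x n, (0 < n)%N -> iter n h x <> x.
Proof.
move=> hX infX mh x n n0 per.
pose A := [set iter k h x | k in `I_n].
have fA : finite_set A by apply: finite_image; exact: finite_II.
have cA : closed A by apply: compact_closed => //; exact: finite_compact.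
have hA : h @` A = A.
  apply/seteqP; split.
    move=> _ [_ [k kn <-] <-]; rewrite -iterS.
    have [kn'|] := ltnP k.+1 n; first by exists k.+1.
    move=> nk; have -> : k.+1 = n by apply/eqP; rewrite eqn_leq nk andbT.
    by rewrite per; exists 0%N.
  move=> _ [k kn <-]; case: k kn => [|k] kn.
    exists (iter n.-1 h x); first by exists n.-1 => //; rewrite /= prednK ?ltnSn //.
    by rewrite -iterS prednK.
  by exists (iter k h x) => //; exists k => //; apply: ltnW.
have [A0|AT] := mh A cA hA.
  have : A x by exists 0%N.
  by rewrite A0.
by apply: infX; rewrite -AT.
Qed.

Lemma iter_cont (X : topologicalType) (h : X -> X) : continuous h ->
  forall k, continuous (iter k h).
Proof.
move=> ch; elim=> [|k IH] y; first by move=> A /=.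
exact: (continuous_comp (IH y) (ch _)).
Qed.

Lemma part1 (R : realType) (X : ptopologicalType) (h g : X -> X) :
  hausdorff_space X -> ~ finite_set [set: X] -> minimal_map h ->
  cancel h g -> cancel g h -> continuous h ->
  forall eps : R, 0 < eps -> forall U : set X, open U -> U !=set0 ->
  exists E : set X, [/\ open E, E !=set0, E `<=` U &
    forall mu : probability (borel X) R, invariant_measure h mu -> (mu E < eps%:E)%E].
Proof.
move=> hX infX mh hK gK ch eps eps0 U oU [x Ux].
have ci := iter_cont ch.
have Ex n : exists E : set X, [/\ open E, E x, E `<=` U &
    forall k, (0 < k < n)%N -> forall z, E z -> ~ E (iter k h z)].
  elim: n => [|n [E [oE Ex EU HE]]]; first by exists U; split => // k /andP[_]; rewrite ltn0.
  have [n0|n0] := posnP n.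
    by exists E; split => // k; rewrite n0 => /andP[k0 k1]; rewrite ltnS leqn0 in k1; rewrite (eqP k1) in k0.
  have neq : x != iter n h x.
    by apply/negP => /eqP e; exact: (no_period hX infX mh n0 (esym e)).
  move: (hX); rewrite open_hausdorff => /(_ _ _ neq) [[P Q] [/= Px Qy] [oP oQ PQ]].
  rewrite inE in Px; rewrite inE in Qy.
  exists (E `&` P `&` (iter n h @^-1` Q)); split.
  - apply: openI; first exact: openI.
    by apply: open_comp => // y _; exact: ci.
  - by split; first split.
  - by move=> z [[Ez _] _]; exact: EU.
  - move=> k /andP[k0]; rewrite ltnS leq_eqVlt => /orP[/eqP ->|kn] z [[Ez Pz] Qz].
      move=> [[_ Pn] _]; move/eqP: PQ => PQ.
      by have : (P `&` Q) (iter n h z) by []; rewrite PQ.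
    by move=> [[En _] _]; apply: (HE k _ z Ez En); rewrite k0.
have [k kl] := ltr_add_invr eps0; rewrite add0r in kl.
set N := k.+1 in kl.
have [E [oE xE EU HE]] := Ex N.
exists E; split => //; first by exists x.
move=> mu imu.
have inv_it i A : open A -> mu (iter i h @^-1` A) = mu A.
  elim: i A => [|i IH] A oA //.
  have oh : open (h @^-1` A) by apply: open_comp => // y _; exact: ch.
  rewrite -(imu A (open_borel oA)); exact: (IH _ oh).
pose S i := iter i h @^-1` E.
have oS i : open (S i) by apply: open_comp => // y _; exact: ci.
have disj i j : (i < j < N)%N -> S i `&` S j = set0.
  move=> /andP[ij jN]; apply/seteqP; split => // y [Si Sj].
  have e : iter j h y = iter (j - i) h (iter i h y) by rewrite -iterD subnK // ltnW.
  have k0 : (0 < j - i < N)%N.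
    rewrite subn_gt0 ij /=; apply: leq_ltn_trans jN; exact: leq_subr.
  have Ei : E (iter i h y) by exact: Si.
  by apply: (HE _ k0 _ Ei); rewrite -e.
have sum n : (n <= N)%N -> pm mu (\big[setU/set0]_(i < n) S i) = n%:R * pm mu E.
  elim: n => [|n IH] nN; first by rewrite big_ord0 pm0 mul0r.
  rewrite big_ord_recr /= pmU.
  - rewrite IH ?(ltnW nN) //.
    have -> : pm mu (S n) = pm mu E by rewrite /pm inv_it.
    by rewrite -[n.+1]addn1 natrD mulrDl mul1r.
  - by apply: open_borel; exact: open_bigU.
  - exact: open_borel.
  - rewrite -bigcup_mkord; apply/seteqP; split => // y [[i /= iN Si] Sn].
    by have := disj i n; rewrite iN nN => /(_ isT) d; have : (S i `&` S n) y by []; rewrite d.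
have NE : N%:R * pm mu E <= 1.
  rewrite -(sum N (leqnn _)); have /andP[_ ->] // := pm01 mu (open_borel (open_bigU N oS)).
have Np : 0 < N%:R :> R by rewrite ltr0n.
have pE : pm mu E <= N%:R^-1.
  rewrite -[pm mu E](mulKf (lt0r_neq0 Np)) -[X in _ <= X]mulr1.
  by apply: ler_wpM2l => //; rewrite invr_ge0 ltW.
rewrite (pmE mu (open_borel oE)) lte_fin; exact: le_lt_trans kl.
Qed.

Lemma shrink_closure (R : realType) (X : ptopologicalType) :
  hausdorff_space X -> compact [set: X] -> forall A B : set X,
  closed A -> open B -> A `<=` B ->
  exists P, [/\ open P, A `<=` P & closure P `<=` B].
Proof.
move=> hX cX A B cA oB AB.
have d : A `&` ~` B = set0.
  by apply/seteqP; split => // x [Ax nBx]; exact: nBx (AB x Ax).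
have [P [Q [oP oQ AP BQ PQ]]] := sepX R hX cX cA (open_closedC oB) d.
exists P; split => //.
have : closure P `<=` ~` Q.
  have -> : ~` Q = closure (~` Q) by apply/closure_id; exact: open_closedC.
  apply: closureS => x Px Qx.
  by have : (P `&` Q) x by []; rewrite PQ.
move=> /subset_trans; apply => x nQx; apply: contrapT => nBx.
exact: nQx (BQ x nBx).
Qed.

Unset Implicit Arguments.
Theorem corollary2p5 (R : realType) (X : pseudoPMetricType R) (h : X -> X) :
  hausdorff_space X ->
  compact [set: X] ->
  ~ finite_set [set: X] ->
  homeomorphism h ->
  minimal_map h ->
  forall eps : R, 0 < eps ->
  (* (1) *)
  (forall U : set X, open U -> U !=set0 ->
     exists E : set X, [/\ open E, E !=set0, E `<=` U &
       forall mu : probability (borel X) R, invariant_measure h mu ->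
         (mu E < eps%:E)%E]) /\
  (* (2) *)
  (forall U : set X, open U -> U !=set0 -> universally_null R h (boundary U) ->
     exists K : set X, [/\ closed K, K `<=` U, interior K !=set0 &
       forall mu : probability (borel X) R, invariant_measure h mu ->
         (mu (U `\` K) < eps%:E)%E]) /\
  (* (3) *)
  (forall U : set X, open U -> U !=set0 -> universally_null R h (boundary U) ->
     exists E : set X, [/\ open E, E `<=` U, closure E `<=` U &
       forall mu : probability (borel X) R, invariant_measure h mu ->
         (mu (U `\` closure E) < eps%:E)%E]) /\
  (* (4) *)
  (forall K : set X, closed K -> universally_null R h (boundary K) ->
     exists E : set X, [/\ open E, K `<=` E &
       forall mu : probability (borel X) R, invariant_measure h mu ->
         (mu (E `\` K) < eps%:E)%E]).
Proof.
move=> hX cX infX [g [hK gK ch cg]] mh eps eps0.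
have cbd (A : set X) : closed (boundary A).
  by apply: closedI; [exact: closed_closure | exact: open_closedC (open_interior A)].
have coreC (C : set X) : closed C -> universally_null R h C ->
    exists V : set X, [/\ open V, C `<=` V & forall mu : probability (borel X) R,
    invariant_measure h mu -> (mu V < eps%:E)%E].
  by move=> cC [_ nC]; exact: (core hX cX hK gK ch cg cC nC eps0).
have mlt (mu : probability (borel X) R) (A V : set X) : open A -> open V -> A `<=` V ->
    (mu V < eps%:E)%E -> (mu A < eps%:E)%E.
  move=> oA oV AV; apply: le_lt_trans; apply: le_measure => //; rewrite inE;
    exact: open_borel.
have openD (A B : set X) : open A -> closed B -> open (A `\` B).
  by move=> oA cB; rewrite setDE; apply: openI => //; exact: closed_openC.
have key (U : set X) : open U -> universally_null R h (boundary U) ->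
    exists E : set X, [/\ open E, E `<=` U, closure E `<=` U,
      (forall mu : probability (borel X) R, invariant_measure h mu ->
         (mu (U `\` closure E) < eps%:E)%E) &
      (E = set0 -> forall mu : probability (borel X) R, invariant_measure h mu ->
         (mu U < eps%:E)%E)].
  move=> oU nU.
  have [V [oV CV Vlt]] := coreC _ (cbd U) nU.
  have [W [oW CW WV]] := shrink_closure R hX cX (cbd U) oV CV.
  have bU x : closure U x -> ~ U x -> W x.
    move=> cUx nUx; apply: CW; split => //.
    by move/interior_id : oU => ->.
  exists (U `&` ~` closure W); split.
  - by apply: openI => //; apply: closed_openC; exact: closed_closure.
  - exact: subIsetl.
  - move=> x cEx; apply: contrapT => nUx.
    have cUx : closure U x by apply: (closureS (@subIsetl _ U (~` closure W))).
    have nWx : ~ W x.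
      have : closure (U `&` ~` closure W) `<=` ~` W.
        have -> : ~` W = closure (~` W) by apply/closure_id; exact: open_closedC.
        apply: closureS => y [_ ncy] Wy; apply: ncy; exact: subset_closure.
      by move=> /(_ x cEx).
    exact: nWx (bU x cUx nUx).
  - move=> mu imu; apply: (mlt mu _ V _ oV _ (Vlt mu imu)).
      by apply: openD => //; exact: closed_closure.
    move=> x [Ux ncEx]; apply: WV; apply: contrapT => ncWx; apply: ncEx.
    exact: subset_closure.
  - move=> E0 mu imu; apply: (mlt mu U V oU oV _ (Vlt mu imu)) => x Ux; apply: WV; apply: contrapT => ncWx.
    by have : (U `&` ~` closure W) x by []; rewrite E0.
split; last split; last split.
- move=> U oU U0; exact: (part1 hX infX mh hK gK ch eps0 oU U0).
- move=> U oU [x Ux] nU.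
  have [E [oE EU cEU Elt E0]] := key U oU nU.
  have [[y Ey]|nE] := pselect (E !=set0).
    exists (closure E); split => //; first exact: closed_closure.
    exists y; apply: filterS (@subset_closure _ E) _.
    exact: open_nbhs_nbhs.
  have E0' : E = set0 by apply/seteqP; split => // z Ez; apply: nE; exists z.
  have cx : closed [set x] by apply: compact_closed => //; exact: compact_set1.
  have [P [oP xP cPU]] := shrink_closure R hX cX cx oU (fun z (e : [set x] z) => ltac:(by rewrite e)).
  exists (closure P); split => //; first exact: closed_closure.
    exists x; apply: filterS (@subset_closure _ P) _.
    by apply: open_nbhs_nbhs; split => //; exact: xP.
  move=> mu imu; apply: (mlt mu _ U _ oU _ (E0 E0' mu imu)).
    by apply: openD => //; exact: closed_closure.
  exact: subDsetl.
- move=> U oU _ nU.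
  have [E [oE EU cEU Elt _]] := key U oU nU.
  by exists E; split.
- move=> K cK nK.
  have [V [oV CV Vlt]] := coreC _ (cbd K) nK.
  exists (K° `|` V); split.
  + by apply: openU => //; exact: open_interior.
  + move=> x Kx; have [iKx|niKx] := pselect (K° x); first by left.
    by right; apply: CV; split => //; exact: subset_closure.
  + move=> mu imu; apply: (mlt mu _ V _ oV _ (Vlt mu imu)).
      by apply: openD => //; apply: openU => //; exact: open_interior.
    move=> x [[iKx|Vx] nKx] //; exfalso; apply: nKx; exact: interior_subset.
Qed.
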